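(* Let $n/2 \leq r \leq n$ and let $(\mathcal{S},\mathcal{T})$ be an $r$-maximal cross-intersecting pair in $\binom{[n]}{\leq r}$. For any integer $\ell\ge0$ with $\ell \le r$ and $n-\ell \leq r$, \[|\mathcal{S}(n-\ell)|+ |\mathcal{T}(n-\ell)| + |\mathcal{S}(\ell)|+ |\mathcal{T}(\ell)| = |\mathcal{X}_{n, r}(n-\ell)| + |\mathcal{Y}_{n, r}(n-\ell)| + |\mathcal{X}_{n, r}(\ell)| + |\mathcal{Y}_{n, r}(\ell)|.\]
   Context: $\binom{[n]}{\le r}$ is the set of subsets of $[n]$ of size at most $r$. A pair $(\mathcal{S},\mathcal{T})$ of non-empty families of non-empty subsets is cross-intersecting if $S\cap T\ne\emptyset$ for all $S\in\mathcal{S},T\in\mathcal{T}$; it is $r$-maximal if whenever $(\mathcal{V},\mathcal{W})$ is a cross-intersecting pair in $\binom{[n]}{\le r}$ with $\mathcal{S}\subseteq\mathcal{V}$, $\mathcal{T}\subseteq\mathcal{W}$, then $(\mathcal{V},\mathcal{W})=(\mathcal{S},\mathcal{T})$. For a family $\mathcal{B}$, $\mathcal{B}(\ell)=\{B\in\mathcal{B}:|B|=\ell\}$. $\mathcal{X}_{n,r}=\{[r]\}$ and $\mathcal{Y}_{n,r}=\{Y\in\binom{[n]}{\le r}: Y\cap[r]\ne\emptyset\}$. *)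

(* Defs.v *)
From mathcomp Require Import all_boot.
Set Implicit Arguments. Unset Strict Implicit. Unset Printing Implicit Defensive.

(* Ground set [n] is 'I_n = {0,...,n-1}; [r] is {i : 'I_n | i < r}. *)
Definition first_r (n r : nat) : {set 'I_n} := [set i : 'I_n | i < r].

Definition in_binom_le (n r : nat) (F : {set {set 'I_n}}) : Prop :=
  forall A, A \in F -> #|A| <= r.

Definition cross_intersecting (n : nat) (S T : {set {set 'I_n}}) : Prop :=
  [/\ S != set0, T != set0, set0 \notin S, set0 \notin T &
      forall A B, A \in S -> B \in T -> A :&: B != set0].

Definition r_maximal (n r : nat) (S T : {set {set 'I_n}}) : Prop :=
  [/\ in_binom_le r S, in_binom_le r T, cross_intersecting S T &
      forall V W : {set {set 'I_n}},
        in_binom_le r V -> in_binom_le r W -> cross_intersecting V W ->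
        S \subset V -> T \subset W -> (V, W) = (S, T)].

Definition layer (n : nat) (B : {set {set 'I_n}}) (l : nat) : {set {set 'I_n}} :=
  [set A in B | #|A| == l].

Definition X_fam (n r : nat) : {set {set 'I_n}} := [set first_r n r].
Definition Y_fam (n r : nat) : {set {set 'I_n}} :=
  [set Y : {set 'I_n} | (#|Y| <= r) && (Y :&: first_r n r != set0)].

(* Main.v *)
Require Import Defs.
From mathcomp Require Import all_boot.
Set Implicit Arguments. Unset Strict Implicit. Unset Printing Implicit Defensive.

Lemma cardC_ord n (A : {set 'I_n}) : #|~: A| = n - #|A|.
Proof.
have h := cardsC A; rewrite card_ord in h.
apply/eqP; rewrite -(eqn_add2l #|A|) h subnKC //.
by apply: leq_trans (max_card _) _; rewrite card_ord.
Qed.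

Lemma count_layers n (F G : {set {set 'I_n}}) a b : a + b = n ->
  (forall A : {set 'I_n}, #|A| = a -> (A \in F) = ~~ (~: A \in G)) ->
  #|layer F a| + #|layer G b| = #|[set A : {set 'I_n} | #|A| == a]|.
Proof.
move=> hab hx; subst n.
set L := [set A : {set 'I_(a+b)} | #|A| == a].
rewrite -(cardsID F L); congr (_ + _).
  by apply: eq_card => A; rewrite /layer !inE andbC.
rewrite -(card_preimset _ (@setC_inj _)); apply: eq_card => A.
rewrite /layer !inE cardC_ord.
case: (boolP (#|A| == a)) => /eqP HA /=.
  by rewrite hx // negbK HA addKn eqxx andbT.
rewrite andbF; apply/negbTE; apply/negP => /andP [_ /eqP Hb]; apply: HA.
have : #|A| <= a + b by apply: leq_trans (max_card _) _; rewrite card_ord.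
move=> Hle; have e := subnKC Hle; rewrite Hb in e.
by apply/eqP; rewrite -(eqn_add2r b) e.
Qed.

Lemma xor_gen n r (S T : {set {set 'I_n}}) (A : {set 'I_n}) :
  (forall X : {set 'I_n}, #|X| <= r -> X != set0 -> (forall Y, Y \in T -> X :&: Y != set0) -> X \in S) ->
  (forall Y : {set 'I_n}, #|Y| <= r -> Y != set0 -> (forall X, X \in S -> X :&: Y != set0) -> Y \in T) ->
  T != set0 -> set0 \notin T ->
  (forall X Y : {set 'I_n}, X \in S -> Y \in T -> X :&: Y != set0) ->
  #|A| <= r -> #|~: A| <= r -> (A \in S) = ~~ (~: A \in T).
Proof.
move=> hS hT Tn0 T0 hST hA hAc.
case: (boolP (A \in S)) => AS.
  apply/esym/negP => AcT; have := hST _ _ AS AcT; by rewrite setICr eqxx.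
apply/esym; apply: negbF.
have [B BT AB] : exists2 B, B \in T & A :&: B == set0.
  case: (boolP (A == set0)) => [/eqP A0 | An0].
    by case/set0Pn: Tn0 => B BT; exists B => //; rewrite A0 set0I.
  case: (boolP [exists B, (B \in T) && (A :&: B == set0)]).
    by case/existsP => B /andP [BT AB]; exists B.
  move/existsPn => H; exfalso; move/negP: AS; apply; apply: hS => // Y YT.
  by have := H Y; rewrite YT.
have sub : B \subset ~: A by rewrite -disjoints_subset disjoint_sym -setI_eq0.
have Bn0 : B != set0 by apply/negP => /eqP B0; move: T0; rewrite -B0 BT.
apply: hT => //.
  by case/set0Pn: Bn0 => x xB; apply/set0Pn; exists x; exact: (subsetP sub).
move=> X XS; have := hST X B XS BT; apply: contra => /eqP h.
by rewrite -subset0 -h setIS.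
Qed.

Lemma maxS n r (S T : {set {set 'I_n}}) : r_maximal r S T ->
  forall X : {set 'I_n}, #|X| <= r -> X != set0 -> (forall Y, Y \in T -> X :&: Y != set0) -> X \in S.
Proof.
move=> [bS bT [Sn0 Tn0 S0 T0 hST] hmax] X hX Xn0 hXT.
have h : (X |: S, T) = (S, T).
  apply: hmax => //.
  - by move=> A; rewrite in_setU1 => /orP [/eqP -> | /bS].
  - split => //.
    + by apply/set0Pn; exists X; exact: setU11.
    + by rewrite in_setU1 negb_or S0 andbT eq_sym.
    + by move=> A B; rewrite in_setU1 => /orP [/eqP -> | AS] BT; [exact: hXT | exact: hST].
  - exact: subsetUr.
case: h => <-; exact: setU11.
Qed.

Lemma maxT n r (S T : {set {set 'I_n}}) : r_maximal r S T ->
  forall Y : {set 'I_n}, #|Y| <= r -> Y != set0 -> (forall X, X \in S -> X :&: Y != set0) -> Y \in T.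
Proof.
move=> [bS bT [Sn0 Tn0 S0 T0 hST] hmax] Y hY Yn0 hYS.
have h : (S, Y |: T) = (S, T).
  apply: hmax => //.
  - by move=> A; rewrite in_setU1 => /orP [/eqP -> | /bT].
  - split => //.
    + by apply/set0Pn; exists Y; exact: setU11.
    + by rewrite in_setU1 negb_or T0 andbT eq_sym.
    + by move=> A B AS; rewrite in_setU1 => /orP [/eqP -> | BT]; [exact: hYS | exact: hST].
  - exact: subsetUr.
case: h => <-; exact: setU11.
Qed.

Lemma card_first_r n r : r <= n -> #|first_r n r| = r.
Proof.
move=> hrn.
have inj : injective (widen_ord hrn) by move=> i j e; apply: val_inj; exact: (congr1 val e).
transitivity #|[set: 'I_r]|; last by rewrite cardsT card_ord.
rewrite -(card_imset _ inj).
apply: eq_card => i; rewrite inE; apply/idP/imsetP => [hi | [j _ ->]].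
  by exists (Ordinal hi); rewrite ?inE //; apply: val_inj.
by rewrite /= ltn_ord.
Qed.

Lemma xorXY n r (A : {set 'I_n}) : r <= n -> #|A| <= r -> #|~: A| <= r ->
  (A \in X_fam n r) = ~~ (~: A \in Y_fam n r).
Proof.
move=> hrn hA hAc.
rewrite /X_fam /Y_fam !inE hAc /= negbK setI_eq0 disjoint_sym disjoints_subset setCK.
apply/eqP/idP => [-> // | sub]; apply/eqP; rewrite eq_sym eqEcard sub /=.
by rewrite card_first_r.
Qed.

From mathcomp Require Import zify.

Theorem lemma5p2 (n r : nat) (S T : {set {set 'I_n}}) :
  n <= 2 * r -> r <= n -> r_maximal r S T ->
  forall l : nat, l <= r -> n - l <= r ->
  #|layer S (n - l)| + #|layer T (n - l)| + #|layer S l| + #|layer T l| =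
  #|layer (X_fam n r) (n - l)| + #|layer (Y_fam n r) (n - l)|
  + #|layer (X_fam n r) l| + #|layer (Y_fam n r) l|.
Proof.
move=> h2r hrn hmax l hl hml.
have [bS bT [Sn0 Tn0 S0 T0 hST] _] := hmax.
have hlm : l + (n - l) = n by rewrite subnKC // (leq_trans hl hrn).
have hml' : (n - l) + l = n by rewrite addnC.
have x1 : forall A : {set 'I_n}, #|A| = l -> (A \in S) = ~~ (~: A \in T).
  move=> A hA; apply: (xor_gen (maxS hmax) (maxT hmax)) => //.
    by rewrite hA.
  by rewrite cardC_ord hA.
have x2 : forall A : {set 'I_n}, #|A| = l -> (A \in T) = ~~ (~: A \in S).
  move=> A hA; apply: (xor_gen (S := T) (T := S) (r := r)) => //.
  - move=> X a b c; apply: (maxT hmax) => // Y YS; rewrite setIC; exact: c.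
  - move=> Y a b c; apply: (maxS hmax) => // X XT; rewrite setIC; exact: c.
  - by move=> X Y XT YS; rewrite setIC; exact: hST.
  - by rewrite hA.
  - by rewrite cardC_ord hA.
have x3 : forall A : {set 'I_n}, #|A| = n - l ->
    (A \in X_fam n r) = ~~ (~: A \in Y_fam n r).
  move=> A hA; apply: xorXY => //; first by rewrite hA.
  by rewrite cardC_ord hA subKn // (leq_trans hl hrn).
have x4 : forall A : {set 'I_n}, #|A| = l ->
    (A \in X_fam n r) = ~~ (~: A \in Y_fam n r).
  move=> A hA; apply: xorXY => //; first by rewrite hA.
  by rewrite cardC_ord hA.
have x5 : forall A : {set 'I_n}, #|A| = n - l ->
    (A \in (set0 : {set {set 'I_n}})) = ~~ (~: A \in [set: {set 'I_n}]).
  by move=> A _; rewrite in_set0 in_setT.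
have e1 := count_layers hlm x1.
have e2 := count_layers hlm x2.
have e3 := count_layers hml' x3.
have e4 := count_layers hlm x4.
have e5 := count_layers hml' x5.
have c0 : #|layer (set0 : {set {set 'I_n}}) (n - l)| = 0.
  by apply: eq_card0 => A; rewrite inE in_set0.
have cT : #|layer [set: {set 'I_n}] l| = #|[set A : {set 'I_n} | #|A| == l]|.
  by apply: eq_card => A; rewrite !inE.
lia.
Qed.
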